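(* For every integer $n\ge0$, \[ B_{n+1,n+1}(x)=\frac12\,\frac{(3n+2)!}{n!\,(2n+1)!}\,p_n(x),\qquad A_{n+1,n+1}(x)=-B_{n+1,n+1}(-x). \] For every integer $n\ge1$, with $b_n=2\,(\tfrac n2+1)_n\,\frac{(2n)!}{(3n+1)!}$, \[ b_nB_{n+1,n}(x)=\binom{n+\frac n2}{n}q_n(x)-\binom{n+\frac{n-1}2}{n}p_n(x),\qquad b_nB_{n,n+1}(x)=\binom{n+\frac n2}{n}q_n(x)+\binom{n+\frac{n-1}2}{n}p_n(x), \] and $A_{n+1,n}(x)=B_{n,n+1}(-x)$, $A_{n,n+1}(x)=B_{n+1,n}(-x)$.
   Context: Pochhammer symbol: $(a)_0=1$, $(a)_n=a(a+1)\cdots(a+n-1)$; for real $a$ and integer $n\ge0$, $\binom{n+a}{n}:=\frac{(a+1)_n}{n!}$. Define $p_n(x)=\sum_{k=0}^n\binom nk\binom{n+\frac k2}{n}(-1)^{n-k}x^k$ and $q_n(x)=\sum_{k=0}^n\binom nk\binom{n+\frac{k-1}2}{n}(-1)^{n-k}x^k$. Type I Legendre–Angelesco polynomials: for integers $n,m\ge 0$ with $n+m\ge1$, $(A_{n,m},B_{n,m})$ is the unique pair of polynomials with $\deg A_{n,m}\le n-1$, $\deg B_{n,m}\le m-1$ such that, writing $Q_{n,m}=A_{n,m}\chi_{[-1,0]}+B_{n,m}\chi_{[0,1]}$, one has $\int_{-1}^1 Q_{n,m}(x)x^k\,dx=0$ for $0\le k\le n+m-2$ and $\int_{-1}^1 Q_{n,m}(x)x^{n+m-1}\,dx=1$.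 *)

(* Defs.v *)
From HB Require Import structures.
From mathcomp Require Import all_boot all_order all_algebra.
Set Implicit Arguments. Unset Strict Implicit. Unset Printing Implicit Defensive.
Import Order.TTheory GRing.Theory Num.Theory.
Local Open Scope ring_scope.

Section Defs.
Variable R : realFieldType.

Definition poch (a : R) (n : nat) : R := \prod_(i < n) (a + i%:R).

(* generalized binomial  binom(n+a, n) := (a+1)_n / n!  *)
Definition gbinom (n : nat) (a : R) : R := poch (a + 1) n / (n`!)%:R.

Definition pP (n : nat) : {poly R} :=
  \sum_(k < n.+1) (('C(n, k))%:R * gbinom n (k%:R / 2) * (-1) ^+ (n - k)) *: 'X^k.

Definition qP (n : nat) : {poly R} :=
  \sum_(k < n.+1) (('C(n, k))%:R * gbinom n ((k%:R - 1) / 2) * (-1) ^+ (n - k)) *: 'X^k.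

Definition polyint (p : {poly R}) : {poly R} :=
  \poly_(i < (size p).+1) (if i is j.+1 then p`_j / (j.+1)%:R else 0).

Definition pint (p : {poly R}) (a b : R) : R := (polyint p).[b] - (polyint p).[a].

(* int_{-1}^{1} Q(x) x^k dx  with  Q = A on [-1,0], B on [0,1]. *)
Definition momentQ (A B : {poly R}) (k : nat) : R :=
  pint (A * 'X^k) (-1) 0 + pint (B * 'X^k) 0 1.

Definition typeI (n m : nat) (A B : {poly R}) : Prop :=
  [/\ (size A <= n)%N, (size B <= m)%N,
      (forall k : nat, (k.+1 < n + m)%N -> momentQ A B k = 0)
    & momentQ A B (n + m).-1 = 1].

End Defs.

(* Main.v *)
Require Import Defs.
From HB Require Import structures.
From mathcomp Require Import all_boot all_order all_algebra.
From mathcomp Require Import ring lra zify.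
Import Order.TTheory GRing.Theory Num.Theory.
Local Open Scope ring_scope.
Set Implicit Arguments. Unset Strict Implicit. Unset Printing Implicit Defensive.

Section S.
Variable R : realFieldType.

Lemma sum_trunc (f : nat -> R) a m : (a <= m)%N -> (forall j, (a <= j)%N -> f j = 0) ->
  \sum_(j < m) f j = \sum_(j < a) f j.
Proof.
move=> am fj; rewrite -!(big_mkord xpredT) (@big_cat_nat _ _ _ a 0 m _ _ (leq0n a) am) /=.
have -> : \sum_(a <= i < m) f i = 0.
  by rewrite big_nat_cond big1 // => j /andP[/andP[aj _] _]; exact: fj.
by rewrite addr0.
Qed.

Lemma horner_polyint (p : {poly R}) m x : (size p <= m)%N ->
  (polyint p).[x] = \sum_(j < m) p`_j / (j.+1)%:R * x ^+ j.+1.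
Proof.
move=> sm; rewrite /polyint horner_poly big_ord_recl /= mul0r add0r.
symmetry; apply: (@sum_trunc (fun j => p`_j / (j.+1)%:R * x ^+ j.+1)) => // j.
by move/leq_sizeP => ->; rewrite // !mul0r.
Qed.

Lemma pintE (p : {poly R}) m a b : (size p <= m)%N ->
  pint p a b = \sum_(j < m) p`_j / (j.+1)%:R * (b ^+ j.+1 - a ^+ j.+1).
Proof.
move=> sm; rewrite /pint !(horner_polyint _ sm) -sumrB.
by apply: eq_bigr => i _; rewrite mulrBr.
Qed.

Lemma momentQE (A B : {poly R}) N k : (size A <= N)%N -> (size B <= N)%N ->
  momentQ A B k = \sum_(i < N) (B`_i + (-1) ^+ (i + k) * A`_i) / (i + k).+1%:R.
Proof.
move=> sA sB.
have sX (Q : {poly R}) : (size Q <= N)%N -> (size (Q * 'X^k)%R <= k + N)%N.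
  move=> sQ; apply/leq_sizeP => j jk; rewrite coefMXn.
  case: ltnP => // kj; move/leq_sizeP: sQ; apply; lia.
rewrite /momentQ !(pintE _ _ (sX A sA)) !(pintE _ _ (sX B sB)).
rewrite !big_split_ord /=.
have z (Q : {poly R}) (g : nat -> R) : \sum_(i < k) (Q * 'X^k)`_i / i.+1%:R * g i = 0.
  by apply: big1 => i _; rewrite coefMXn ltn_ord !mul0r.
rewrite (z A (fun i => 0 ^+ i.+1 - (-1) ^+ i.+1)) (z B (fun i => 1 ^+ i.+1 - 0 ^+ i.+1)) !add0r.
rewrite -big_split /=; apply: eq_bigr => i _.
rewrite !coefMXn ltnNge leq_addr /= addKn expr0n /= expr1n subr0 sub0r.
rewrite exprSr !mulrN1 opprK addnC mulr1 mulrDl addrC; congr (_ + _).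
ring.
Qed.
End S.

Section S.
Variable R : realFieldType.

Lemma coef_sumX n (c : nat -> R) i :
  (\sum_(k < n.+1) c k *: 'X^k)`_i = if (i <= n)%N then c i else 0.
Proof.
rewrite coef_sum.
under eq_bigr => k _ do rewrite coefZ coefXn.
case: leqP => [iln|nli].
  rewrite (bigD1 (Ordinal (iln : i < n.+1)%N)) //= eqxx mulr1 big1 ?addr0 //.
  move=> k kn; case: eqP => ik; last by rewrite mulr0.
  by case/eqP: kn; apply: val_inj.
by apply: big1 => k _; case: eqP => ik; [move: (ltn_ord k); lia | rewrite mulr0].
Qed.

Lemma coef_pP n i : (pP R n)`_i = ('C(n, i))%:R * gbinom n (i%:R / 2) * (-1) ^+ (n - i).
Proof.
rewrite /pP (coef_sumX n (fun k : nat => ('C(n, k))%:R * gbinom n (k%:R / 2) * (-1) ^+ (n - k))); case: leqP => // ni.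
by rewrite bin_small // !mul0r.
Qed.

Lemma coef_qP n i : (qP R n)`_i = ('C(n, i))%:R * gbinom n ((i%:R - 1) / 2) * (-1) ^+ (n - i).
Proof.
rewrite /qP (coef_sumX n (fun k : nat => ('C(n, k))%:R * gbinom n ((k%:R - 1) / 2) * (-1) ^+ (n - k))); case: leqP => // ni.
by rewrite bin_small // !mul0r.
Qed.

Lemma coef_compN (p : {poly R}) i : (p \Po - 'X)`_i = (-1) ^+ i * p`_i.
Proof.
rewrite coef_comp_poly.
under eq_bigr => k _ do rewrite -scaleN1r exprZn coefZ coefXn.
case: (ltnP i (size p)) => [ip|pi].
  rewrite (bigD1 (Ordinal ip)) //= eqxx mulr1 big1 ?addr0; first by rewrite mulrC.
  move=> k kn; case: eqP => ik; last by rewrite !mulr0.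
  by case/eqP: kn; apply: val_inj.
rewrite (leq_sizeP _ _ pi) // mulr0.
apply: big1 => k _; case: eqP => ik; last by rewrite !mulr0.
by move: (ltn_ord k); rewrite -ik ltnNge pi.
Qed.
End S.

Section S.
Variable R : realFieldType.

Definition D n (h : nat -> R) := \sum_(k < n.+1) ('C(n, k))%:R * (-1) ^+ k * h k.

Lemma D_lin n (f g : nat -> R) a b :
  D n (fun k => a * f k + b * g k) = a * D n f + b * D n g.
Proof.
rewrite /D !mulr_sumr -big_split /=; apply: eq_bigr => k _; ring.
Qed.

Lemma D_ext n (f g : nat -> R) : (forall k, (k <= n)%N -> f k = g k) -> D n f = D n g.
Proof. by move=> fg; apply: eq_bigr => k _; rewrite fg // -ltnS. Qed.

Lemma D_S n h : D n.+1 h = D n (fun k => h k - h k.+1).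
Proof.
pose g k := ('C(n, k))%:R * (-1) ^+ k * h k : R.
pose g' k := (if k is k'.+1 then ('C(n, k'))%:R * (-1) ^+ k * h k else 0) : R.
have E1 : D n.+1 h = \sum_(k < n.+2) g k + \sum_(k < n.+2) g' k.
  rewrite /D -big_split /=; apply: eq_bigr => [[[|k] kn]] _ /=.
    by rewrite /g /g' !bin0 addr0.
  by rewrite /g /g' binS natrD; ring.
have E2 : \sum_(k < n.+2) g k = \sum_(k < n.+1) g k.
  by rewrite big_ord_recr /= /g bin_small // !mul0r addr0.
have E3 : \sum_(k < n.+2) g' k = \sum_(k < n.+1) ('C(n, k))%:R * (-1) ^+ k.+1 * h k.+1.
  by rewrite big_ord_recl /= add0r.
rewrite E1 E2 E3 /D -big_split /=; apply: eq_bigr => k _; rewrite /g exprS; ring.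
Qed.

Lemma size_shift (f : {poly R}) n : (size f <= n.+1)%N ->
  (size (f - (f \Po ('X + 1%:P)))%R <= n)%N.
Proof.
move=> sf; have sc : size (f \Po ('X + 1%:P)) = size f by rewrite size_comp_poly2 // size_XaddC.
have sf0 := sf; have sf' := sf; rewrite -sc in sf'.
move/leq_sizeP: sf => sf; move/leq_sizeP: sf' => sf'.
apply/leq_sizeP => j jn; rewrite coefB.
case: (ltngtP j n) => [//|nj|->]; first by lia.
  by rewrite sf ?sf' ?subrr.
case: (ltngtP (size f) n.+1) => sfn.
- have h2 : (size f <= n)%N by rewrite -ltnS.
  have h3 : (size (f \Po ('X + 1%:P)) <= n)%N by rewrite sc.
  by move/leq_sizeP: h2 => h2; move/leq_sizeP: h3 => h3; rewrite h2 // h3 // subrr.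
- by move: sf0; rewrite leqNgt sfn.
- have := lead_coef_comp f (_ : (1 < size (('X + 1%:P)%R : {poly R}))%N); rewrite size_XaddC => /(_ isT).
  rewrite lead_coefXaddC expr1n mulr1 /lead_coef sc sfn /= => ->; by rewrite subrr.
Qed.

Lemma D_poly n (f : {poly R}) : (size f <= n)%N -> D n (fun k => f.[k%:R]) = 0.
Proof.
elim: n f => [|n IH] f sf.
  rewrite /D big_ord1 /=; move: sf; rewrite leqn0 size_poly_eq0 => /eqP ->.
  by rewrite horner0 mulr0.
rewrite D_S -(IH _ (size_shift sf)); apply: D_ext => k _.
by rewrite hornerD hornerN horner_comp hornerD hornerX hornerC mulrSr addrC.
Qed.

Lemma D_inv n (a : R) : 0 < a ->
  D n (fun k => 1 / (k%:R + a)) = (n`!)%:R / \prod_(l < n.+1) (a + l%:R).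
Proof.
elim: n a => [|n IH] a a0.
  by rewrite /D big_ord1 big_ord1 /= !mul1r add0r addr0.
rewrite D_S.
have -> : D n (fun k => 1 / (k%:R + a) - 1 / (k.+1%:R + a)) =
   1 * D n (fun k => 1 / (k%:R + a)) + (-1) * D n (fun k => 1 / (k%:R + (a + 1))).
  rewrite -D_lin; apply: D_ext => k _; rewrite mulrSr -addrA [1 + a]addrC; ring.
rewrite IH // IH; last by rewrite addr_gt0.
rewrite big_ord_recl [X in _ = _ / X]big_ord_recl big_ord_recr /=.
set P := \prod_(i < n) (a + 1 + i%:R).
have h1 : \prod_(i < n) (a + (bump 0 i)%:R) = P.
  by apply: eq_bigr => i _; rewrite /bump /= add1n mulrSr; ring.
have h2 : \prod_(i < n.+1) (a + (bump 0 i)%:R) = P * (a + 1 + n%:R).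
  by rewrite big_ord_recr /= h1 /bump /= add1n mulrSr; congr (_ * _); ring.
rewrite h1 h2 factS natrM.
have P0 : P != 0.
  rewrite /P prodf_seq_neq0; apply/allP => i _ /=; rewrite gt_eqF //; have := ler0n R i; lra.
have a0' : a != 0 by rewrite gt_eqF.
have a1 : a + 1 + n%:R != 0 by rewrite gt_eqF //; have := ler0n R n; lra.
rewrite addr0 mulrSr; field; rewrite P0 a0' a1 //.
Qed.

Lemma D_frac n (F : {poly R}) (a : R) : (size F <= n.+1)%N -> 0 < a ->
  D n (fun k => F.[k%:R] / (k%:R + a)) = F.[- a] * ((n`!)%:R / \prod_(l < n.+1) (a + l%:R)).
Proof.
move=> sF a0.
set G := F %/ ('X - (- a)%:P).
have EF : F = G * ('X - (- a)%:P) + (F.[- a])%:P.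
  by rewrite -modp_XsubC -divp_eq.
have sG : (size G <= n)%N.
  by rewrite size_divp ?polyXsubC_eq0 // size_XsubC leq_subLR.
transitivity (D n (fun k => 1 * G.[k%:R] + F.[- a] * (1 / (k%:R + a)))).
  apply: D_ext => k _.
  have ka : k%:R + a != 0 by rewrite gt_eqF //; have := ler0n R k; lra.
  rewrite {1}EF hornerD hornerM hornerXsubC hornerC opprK; field; exact: ka.
by rewrite D_lin (D_poly sG) (D_inv n a0) mulr0 add0r.
Qed.
End S.

Section S.
Variable R : realFieldType.

Lemma size_prod_lin (I : Type) (r : seq I) (c : I -> R) :
  (size (\prod_(l <- r) ('X + (c l)%:P))%R <= (size r).+1)%N.
Proof.
elim: r => [|a r IH]; first by rewrite big_nil size_poly1.
rewrite big_cons; apply: leq_trans (size_polyMleq _ _) _.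
by rewrite size_XaddC /=.
Qed.

Lemma cauchy (m : nat) (t u : nat -> R) :
  (forall j, (j < m)%N -> 0 < t j) ->
  (forall j1 j2, (j1 < m)%N -> (j2 < m)%N -> t j1 = t j2 -> j1 = j2) ->
  (forall j, (j < m)%N -> \sum_(i < m) u i / (i%:R + t j) = 0) ->
  forall i, (i < m)%N -> u i = 0.
Proof.
move=> tpos tinj hs.
pose P := \sum_(i < m) u i *: \prod_(l < m | l != i) ('X + (l%:R)%:P).
have sP : (size P <= m)%N.
  apply: (leq_trans (size_sum _ _ _)); apply/bigmax_leqP => i _.
  apply: (leq_trans (size_scale_leq _ _)).
  rewrite -big_filter; apply: (leq_trans (size_prod_lin _ _)).
  rewrite size_filter.
  have := cardC1 i; rewrite card_ord cardE /enum_mem size_filter.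
  move=> ->; case: m {tpos tinj hs P} i => [[]//|m i]; by [].
have P0 : P = 0.
  apply/eqP; apply/negPn/negP => Pn0.
  have := max_poly_roots Pn0 (rs := [seq t j | j <- iota 0 m]).
  rewrite size_map size_iota => /(_ _ _) H.
  have: (m < size P)%N; last by rewrite ltnNge sP.
  apply: H.
    apply/allP => x /mapP [j]; rewrite mem_iota add0n => /andP [_ jm] ->.
    rewrite /root.
    have tj := tpos j jm.
    set Q := \prod_(l < m) (t j + l%:R).
    suff -> : P.[t j] = Q * \sum_(i < m) u i / (i%:R + t j) by rewrite hs // mulr0.
    rewrite /P horner_sum mulr_sumr; apply: eq_bigr => i _.
    rewrite hornerZ horner_prod /Q [X in _ = X * _](bigD1 i) //=.
    under eq_bigr => l _ do rewrite hornerD hornerX hornerC.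
    have ti : i%:R + t j != 0 by rewrite gt_eqF //; have := ler0n R i; lra.
    rewrite [t j + i%:R]addrC; field; exact: ti.
  rewrite map_inj_in_uniq ?iota_uniq // => j1 j2; rewrite !mem_iota !add0n.
  by move=> /andP[_ h1] /andP[_ h2]; apply: tinj.
move=> i0 im; have := congr1 (horner^~ (- i0%:R)) P0.
rewrite horner0 /P horner_sum (bigD1 (Ordinal im)) //=.
rewrite [X in _ + X]big1 ?addr0; last first.
  move=> i ii0; rewrite hornerZ horner_prod (bigD1 (Ordinal im)) /=.
    by rewrite hornerD hornerX hornerC addNr mul0r mulr0.
  by rewrite eq_sym.
rewrite hornerZ horner_prod => /eqP; rewrite mulf_eq0 => /orP[/eqP //|].
move=> H; exfalso; move: H; apply/negP; rewrite prodf_seq_neq0; apply/allP => l _ /=.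
apply/implyP => li; rewrite hornerD hornerX hornerC addrC subr_eq0 eqr_nat.
by apply: contra li => /eqP li; apply/eqP/val_inj.
Qed.
End S.

Section S.
Variable R : realFieldType.

Definition Fe n (e : R) : {poly R} := \prod_(l < n) ('X + (2 * l%:R + 2 - e)%:P).

Lemma size_Fe n e : (size (Fe n e) <= n.+1)%N.
Proof.
rewrite /Fe; apply: leq_trans (size_prod_lin _ _) _.
by rewrite [index_enum _]unlock -enumT size_enum_ord.
Qed.

Lemma prod_half n (f : 'I_n -> R) : \prod_(l < n) (f l / 2) = \prod_(l < n) f l / 2 ^+ n.
Proof.
elim: n f => [|n IH] f; first by rewrite !big_ord0 expr0 divr1.
rewrite !big_ord_recr /= IH exprS; have h2 : (2 : R) != 0 by rewrite pnatr_eq0.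
field; exact: expf_neq0.
Qed.

Lemma gb_F n e (x : R) : gbinom n ((x - e) / 2) = (Fe n e).[x] / (2 ^+ n * (n`!)%:R).
Proof.
rewrite /gbinom /poch /Fe horner_prod invfM mulrA; congr (_ / _).
rewrite -prod_half; apply: eq_bigr => l _.
rewrite hornerD hornerX hornerC; by field.
Qed.

Lemma sign_sub n i : (i <= n)%N -> (-1) ^+ (n - i) = (-1) ^+ n * (-1) ^+ i :> R.
Proof.
move=> iln; rewrite -{2}(subnK iln) exprD -mulrA.
have -> : (-1) ^+ i * (-1) ^+ i = 1 :> R by rewrite -exprD addnn -signr_odd odd_double.
by rewrite mulr1.
Qed.

Lemma mom_gen n e (a : R) : 0 < a ->
  \sum_(i < n.+1) ('C(n, i))%:R * gbinom n ((i%:R - e) / 2) * (-1) ^+ (n - i) / (i%:R + a)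
  = (-1) ^+ n / 2 ^+ n * (Fe n e).[- a] / \prod_(l < n.+1) (a + l%:R).
Proof.
move=> a0.
have nf : (n`!)%:R != 0 :> R by rewrite pnatr_eq0 -lt0n fact_gt0.
have h2 : (2 : R) ^+ n != 0 by apply: expf_neq0; rewrite pnatr_eq0.
transitivity ((-1) ^+ n / (2 ^+ n * (n`!)%:R) * D n (fun k => (Fe n e).[k%:R] / (k%:R + a))).
  rewrite /D mulr_sumr; apply: eq_bigr => i _.
  rewrite gb_F sign_sub; last by rewrite -ltnS.
  field; rewrite nf h2 //=.
  by rewrite gt_eqF //; have := ler0n R i; lra.
rewrite D_frac ?size_Fe //; field; rewrite nf h2 /=.
rewrite andbT prodf_seq_neq0; apply/allP => l _ /=; rewrite gt_eqF //; have := ler0n R l; lra.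
Qed.
End S.

Section S.
Variable R : realFieldType.

Lemma prod_lmn n : \prod_(l < n) (l%:R - n%:R) = (-1) ^+ n * (n`!)%:R :> R.
Proof.
elim: n => [|n IH]; first by rewrite big_ord0 expr0 mul1r.
rewrite big_ord_recl /=.
have -> : \prod_(i < n) ((bump 0 i)%:R - (n.+1)%:R) = \prod_(i < n) (i%:R - n%:R :> R).
  by apply: eq_bigr => i _; rewrite /bump /= add1n !mulrSr; ring.
by rewrite IH factS natrM exprS mulrSr; ring.
Qed.

Lemma Fe_zero n e j : (j < n)%N -> (Fe n e).[- (2 * j%:R + 2 - e)] = 0 :> R.
Proof.
move=> jn; rewrite /Fe horner_prod (bigD1 (Ordinal jn)) //=.
by rewrite hornerD hornerX hornerC addNr mul0r.
Qed.

Lemma Fe_last n e : (Fe n e).[- (2 * n%:R + 2 - e)] = (-2) ^+ n * (n`!)%:R :> R.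
Proof.
rewrite /Fe horner_prod.
have -> : \prod_(l < n) ('X + (2 * l%:R + 2 - e)%:P).[- (2 * n%:R + 2 - e)]
   = \prod_(l < n) (2 * (l%:R - n%:R)) :> R.
  by apply: eq_bigr => l _; rewrite hornerD hornerX hornerC; ring.
rewrite big_split /= prod_lmn.
have -> : \prod_(l < n) (2 : R) = 2 ^+ n.
  elim: n {e} => [|n IH]; first by rewrite big_ord0.
  by rewrite big_ord_recr /= IH exprSr.
rewrite (_ : (-2 : R) = -1 * 2); last by ring.
rewrite exprMn; ring.
Qed.

Definition Mp n (a : R) := \sum_(i < n.+1) (pP R n)`_i / (i%:R + a).
Definition Mq n (a : R) := \sum_(i < n.+1) (qP R n)`_i / (i%:R + a).

Lemma Mp_gen n a : 0 < a ->
  Mp n a = (-1) ^+ n / 2 ^+ n * (Fe n 0).[- a] / \prod_(l < n.+1) (a + l%:R).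
Proof.
move=> a0; rewrite -mom_gen //; apply: eq_bigr => i _; by rewrite coef_pP subr0.
Qed.

Lemma Mq_gen n a : 0 < a ->
  Mq n a = (-1) ^+ n / 2 ^+ n * (Fe n 1).[- a] / \prod_(l < n.+1) (a + l%:R).
Proof.
move=> a0; rewrite -mom_gen //; apply: eq_bigr => i _; by rewrite coef_qP.
Qed.

Lemma signsq n : (-1) ^+ n / 2 ^+ n * ((-2) ^+ n) = 1 :> R.
Proof.
have h2 : (2 : R) ^+ n != 0 by apply: expf_neq0; rewrite pnatr_eq0.
rewrite (_ : (-2 : R) = -1 * 2); last by ring.
rewrite exprMn.
have e1 : (-1) ^+ n * (-1) ^+ n = 1 :> R by rewrite -exprD addnn -signr_odd odd_double.
transitivity ((-1) ^+ n * (-1) ^+ n * (2 ^+ n / 2 ^+ n) : R); first by ring.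
by rewrite e1 divff // mulr1.
Qed.

Lemma Mp_zero n j : (j < n)%N -> Mp n (2 * j%:R + 2) = 0.
Proof.
move=> jn; rewrite Mp_gen; last by have := ler0n R j; lra.
by rewrite -(subr0 (2 * j%:R + 2)) Fe_zero // subr0 mulr0 mul0r.
Qed.

Lemma Mq_zero n j : (j < n)%N -> Mq n (2 * j%:R + 1) = 0.
Proof.
move=> jn; rewrite Mq_gen; last by have := ler0n R j; lra.
by rewrite (_ : 2 * j%:R + 1 = 2 * j%:R + 2 - 1) ?Fe_zero ?mulr0 ?mul0r //; ring.
Qed.

Lemma Mp_last n : Mp n (2 * n%:R + 2) = (n`!)%:R / \prod_(l < n.+1) (2 * n%:R + 2 + l%:R).
Proof.
rewrite Mp_gen; last by have := ler0n R n; lra.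
rewrite -(subr0 (2 * n%:R + 2)) Fe_last subr0 mulrA signsq mul1r //.
Qed.

Lemma Mq_last n : Mq n (2 * n%:R + 1) = (n`!)%:R / \prod_(l < n.+1) (2 * n%:R + 1 + l%:R).
Proof.
rewrite Mq_gen; last by have := ler0n R n; lra.
rewrite (_ : 2 * n%:R + 1 = 2 * n%:R + 2 - 1); last by ring.
by rewrite Fe_last mulrA signsq mul1r.
Qed.
End S.

Section S.
Variable R : realFieldType.

Lemma mom_even (A B : {poly R}) N j : (size A <= N)%N -> (size B <= N)%N ->
  momentQ A B (2 * j) = \sum_(i < N) (B`_i + (-1) ^+ i * A`_i) / (i%:R + (2 * j%:R + 1)).
Proof.
move=> sA sB; rewrite (momentQE _ sA sB); apply: eq_bigr => i _.
congr ((_ + _ * _) / _).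
  by rewrite -signr_odd oddD oddM /= addbF signr_odd.
rewrite -addn1 !natrD; ring.
Qed.

Lemma mom_odd (A B : {poly R}) N j : (size A <= N)%N -> (size B <= N)%N ->
  momentQ A B (2 * j).+1 = \sum_(i < N) (B`_i - (-1) ^+ i * A`_i) / (i%:R + (2 * j%:R + 2)).
Proof.
move=> sA sB; rewrite (momentQE _ sA sB); apply: eq_bigr => i _.
congr ((_ + _) / _).
  by rewrite addnS exprS -signr_odd oddD oddM /= addbF signr_odd mulN1r mulNr.
by rewrite addnS !mulrSr natrD natrM; ring.
Qed.

Lemma size_subP (P Q : {poly R}) N : (size P <= N)%N -> (size Q <= N)%N -> (size (P - Q)%R <= N)%N.
Proof.
move=> /leq_sizeP hP /leq_sizeP hQ; apply/leq_sizeP => j jn.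
by rewrite coefB hP // hQ // subrr.
Qed.

Lemma momentQ_sub (A B A' B' : {poly R}) N k :
  (size A <= N)%N -> (size B <= N)%N -> (size A' <= N)%N -> (size B' <= N)%N ->
  momentQ (A - A') (B - B') k = momentQ A B k - momentQ A' B' k.
Proof.
move=> sA sB sA' sB'.
rewrite (momentQE _ (size_subP sA sA') (size_subP sB sB')) (momentQE _ sA sB) (momentQE _ sA' sB').
rewrite -sumrB; apply: eq_bigr => i _; rewrite !coefB; ring.
Qed.

Lemma kill n (A B : {poly R}) : (size A <= n.+1)%N -> (size B <= n.+1)%N ->
  (forall k, (k <= 2 * n)%N -> momentQ A B k = 0) ->
  [\/ (size A <= n)%N, (size B <= n)%N | momentQ A B (2 * n).+1 = 0] -> A = 0 /\ B = 0.
Proof.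
move=> sA sB hk hc.
pose u i := B`_i + (-1) ^+ i * A`_i.
pose v i := B`_i - (-1) ^+ i * A`_i.
have tp1 j : (j < n.+1)%N -> 0 < 2 * j%:R + 1 :> R by have := ler0n R j; lra.
have tp2 j : (j < n.+1)%N -> 0 < 2 * j%:R + 2 :> R by have := ler0n R j; lra.
have ti1 j1 j2 : (j1 < n.+1)%N -> (j2 < n.+1)%N -> 2 * j1%:R + 1 = 2 * j2%:R + 1 :> R -> j1 = j2.
  move=> _ _ h; apply/eqP; rewrite -(eqr_nat R); apply/eqP; lra.
have ti2 j1 j2 : (j1 < n.+1)%N -> (j2 < n.+1)%N -> 2 * j1%:R + 2 = 2 * j2%:R + 2 :> R -> j1 = j2.
  move=> _ _ h; apply/eqP; rewrite -(eqr_nat R); apply/eqP; lra.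
have hu : forall i, (i < n.+1)%N -> u i = 0.
  apply: (cauchy tp1 ti1) => j jn; rewrite -(mom_even _ sA sB); apply: hk; lia.
have hv : forall i, (i < n.+1)%N -> v i = 0.
  case: hc => [hA|hB|hl].
  - have vn : v n = 0.
      have := hu n (ltnSn n); rewrite /u /v; move/leq_sizeP: hA => hA.
      by rewrite hA // mulr0 addr0 subr0.
    move=> i; rewrite ltnS leq_eqVlt => /orP[/eqP -> //|].
    have tp2' j : (j < n)%N -> 0 < 2 * j%:R + 2 :> R by have := ler0n R j; lra.
    have ti2' j1 j2 : (j1 < n)%N -> (j2 < n)%N -> 2 * j1%:R + 2 = 2 * j2%:R + 2 :> R -> j1 = j2.
      move=> _ _ h; apply/eqP; rewrite -(eqr_nat R); apply/eqP; lra.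
    apply: (cauchy tp2' ti2') => j jn.
    have hj : ((2 * j).+1 <= 2 * n)%N by lia.
    have := hk _ hj.
    by rewrite (mom_odd _ sA sB) big_ord_recr /= -/(v n) vn mul0r addr0.
  - have vn : v n = 0.
      have := hu n (ltnSn n); rewrite /u /v; move/leq_sizeP: hB => hB.
      rewrite hB // add0r => /eqP; rewrite mulf_eq0 signr_eq0 /= => /eqP ->.
      by rewrite mulr0 subr0.
    move=> i; rewrite ltnS leq_eqVlt => /orP[/eqP -> //|].
    have tp2' j : (j < n)%N -> 0 < 2 * j%:R + 2 :> R by have := ler0n R j; lra.
    have ti2' j1 j2 : (j1 < n)%N -> (j2 < n)%N -> 2 * j1%:R + 2 = 2 * j2%:R + 2 :> R -> j1 = j2.
      move=> _ _ h; apply/eqP; rewrite -(eqr_nat R); apply/eqP; lra.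
    apply: (cauchy tp2' ti2') => j jn.
    have hj : ((2 * j).+1 <= 2 * n)%N by lia.
    have := hk _ hj.
    by rewrite (mom_odd _ sA sB) big_ord_recr /= -/(v n) vn mul0r addr0.
  - apply: (cauchy tp2 ti2) => j jn; rewrite -(mom_odd _ sA sB).
    move: jn; rewrite ltnS leq_eqVlt => /orP[/eqP -> //|jn]; apply: hk; lia.
have hAB i : (i < n.+1)%N -> A`_i = 0 /\ B`_i = 0.
  move=> il; have := hu i il; have := hv i il; rewrite /u /v => h1 h2.
  have hb : B`_i = 0 by lra.
  split => //; move: h2; rewrite hb add0r => /eqP; rewrite mulf_eq0 signr_eq0 /=.
  by move/eqP.
split; apply/polyP => i; rewrite coef0; case: (ltnP i n.+1) => il.
- by case: (hAB i il).
- by move/leq_sizeP: sA; apply.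
- by case: (hAB i il).
- by move/leq_sizeP: sB; apply.
Qed.
End S.

Lemma fact_prod m k : (m`! * \prod_(l < k) (m.+1 + l))%N = (m + k)`!.
Proof.
elim: k => [|k IH]; first by rewrite big_ord0 muln1 addn0.
by rewrite big_ord_recr /= mulnA IH addnS factS mulnC addSn.
Qed.

Section S.
Variable R : realFieldType.

Lemma prod_natR (m k : nat) :
  \prod_(l < k) (m.+1%:R + l%:R) = ((m + k)`!)%:R / (m`!)%:R :> R.
Proof.
have nf : (m`!)%:R != 0 :> R by rewrite pnatr_eq0 -lt0n fact_gt0.
rewrite -fact_prod natrM natr_prod.
under [in RHS]eq_bigr => l _ do rewrite natrD.
by field.
Qed.

Lemma size_pP n : (size (pP R n) <= n.+1)%N.
Proof. by apply/leq_sizeP => i ni; rewrite coef_pP bin_small // !mul0r. Qed.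

Lemma size_qP n : (size (qP R n) <= n.+1)%N.
Proof. by apply/leq_sizeP => i ni; rewrite coef_qP bin_small // !mul0r. Qed.

Lemma size_compN (p : {poly R}) N : (size p <= N)%N -> (size (p \Po - 'X) <= N)%N.
Proof.
move/leq_sizeP => h; apply/leq_sizeP => i iN; by rewrite coef_compN h // mulr0.
Qed.

Lemma sizeZ (p : {poly R}) c N : (size p <= N)%N -> (size (c *: p) <= N)%N.
Proof. by move=> h; apply: leq_trans (size_scale_leq _ _) h. Qed.

Lemma signsq2 i : (-1) ^+ i * (-1) ^+ i = 1 :> R.
Proof. by rewrite -exprD addnn -signr_odd odd_double. Qed.

Lemma parity k : {j | k = (2 * j)%N} + {j | k = (2 * j).+1}.
Proof.
case h: (odd k).
  by right; exists k./2; rewrite -{1}(odd_double_half k) h mul2n.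
by left; exists k./2; rewrite -{1}(odd_double_half k) h mul2n.
Qed.

Lemma uniq_gen n (A B A' B' : {poly R}) :
  (size A <= n.+1)%N -> (size B <= n.+1)%N -> (size A' <= n.+1)%N -> (size B' <= n.+1)%N ->
  (forall k, (k <= 2 * n)%N -> momentQ A B k = momentQ A' B' k) ->
  [\/ (size A <= n)%N /\ (size A' <= n)%N, (size B <= n)%N /\ (size B' <= n)%N
    | momentQ A B (2 * n).+1 = momentQ A' B' (2 * n).+1] -> A = A' /\ B = B'.
Proof.
move=> sA sB sA' sB' hk hc.
have := @kill R n (A - A') (B - B') (size_subP sA sA') (size_subP sB sB').
case.
- by move=> k kn; rewrite (momentQ_sub _ sA sB sA' sB') hk // subrr.
- case: hc => [[h1 h2]|[h1 h2]|h].
  + by constructor 1; apply: size_subP.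
  + by constructor 2; apply: size_subP.
  + by constructor 3; rewrite (momentQ_sub _ sA sB sA' sB') h subrr.
- by move=> /eqP; rewrite subr_eq0 => /eqP -> /eqP; rewrite subr_eq0 => /eqP ->.
Qed.
End S.

Section S.
Variable R : realFieldType.

Lemma exist1 n :
  let c : R := 2^-1 * ((3 * n + 2)`!)%:R / ((n`!)%:R * ((2 * n + 1)`!)%:R) in
  typeI n.+1 n.+1 (- ((c *: pP R n) \Po (- 'X))) (c *: pP R n).
Proof.
move=> c; set B0 := c *: pP R n; set A0 := - (B0 \Po - 'X).
have sB : (size B0 <= n.+1)%N by apply/sizeZ/size_pP.
have sA : (size A0 <= n.+1)%N by rewrite size_opp; apply/size_compN.
have coA i : A0`_i = - ((-1) ^+ i * B0`_i) by rewrite coefN coef_compN.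
have ev j : momentQ A0 B0 (2 * j) = 0.
  rewrite (mom_even _ sA sB); apply: big1 => i _.
  by rewrite coA mulrN mulrA signsq2 mul1r subrr mul0r.
have od j : momentQ A0 B0 (2 * j).+1 = 2 * c * Mp n (2 * j%:R + 2).
  rewrite (mom_odd _ sA sB) /Mp mulr_sumr; apply: eq_bigr => i _.
  by rewrite coA mulrN opprK mulrA signsq2 mul1r /B0 coefZ; ring.
split => //.
  move=> k; case: (parity k) => [[j ->]|[j ->]] kn; first exact: ev.
  by rewrite od Mp_zero ?mulr0 //; lia.
rewrite (_ : ((n.+1 + n.+1).-1 = (2 * n).+1)%N); last by lia.
rewrite od Mp_last.
rewrite (_ : 2 * n%:R + 2 = ((2 * n + 1).+1)%:R :> R); last first.
  by rewrite -addn1 -addn1 !natrD; ring.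
rewrite prod_natR (_ : (2 * n + 1 + n.+1 = 3 * n + 2)%N); last by lia.
have nf k : (k`!)%:R != 0 :> R by rewrite pnatr_eq0 -lt0n fact_gt0.
rewrite /c; field; rewrite !nf //.
Qed.
End S.

Section S.
Variable R : realFieldType.

Lemma poch_neq0 n : poch (n%:R / 2 + 1) n != 0 :> R.
Proof.
rewrite /poch prodf_seq_neq0; apply/allP => l _ /=; rewrite gt_eqF //.
have := ler0n R n; have := ler0n R l; lra.
Qed.

Lemma b_neq0 n : 2 * poch (n%:R / 2 + 1) n * ((2 * n)`!)%:R / ((3 * n + 1)`!)%:R != 0 :> R.
Proof.
have nf k : (k`!)%:R != 0 :> R by rewrite pnatr_eq0 -lt0n fact_gt0.
have h2 : (2 : R) != 0 by rewrite pnatr_eq0.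
rewrite !mulf_neq0 ?invr_eq0 ?nf ?poch_neq0 //.
Qed.

Lemma signsq_mul i (x : R) : (-1) ^+ i * ((-1) ^+ i * x) = x.
Proof. by rewrite mulrA signsq2 mul1r. Qed.

Lemma exist2 n :
  let b : R := 2 * poch (n%:R / 2 + 1) n * ((2 * n)`!)%:R / ((3 * n + 1)`!)%:R in
  let X1 : {poly R} := gbinom n (n%:R / 2) *: qP R n - gbinom n ((n%:R - 1) / 2) *: pP R n in
  let X2 : {poly R} := gbinom n (n%:R / 2) *: qP R n + gbinom n ((n%:R - 1) / 2) *: pP R n in
  typeI n.+1 n (b^-1 *: (X2 \Po - 'X)) (b^-1 *: X1) /\
  typeI n n.+1 (b^-1 *: (X1 \Po - 'X)) (b^-1 *: X2).
Proof.
move=> b X1 X2.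
pose g1 : R := gbinom n (n%:R / 2); pose g2 : R := gbinom n ((n%:R - 1) / 2).
have c1 i : X1`_i = g1 * (qP R n)`_i - g2 * (pP R n)`_i by rewrite coefB !coefZ.
have c2 i : X2`_i = g1 * (qP R n)`_i + g2 * (pP R n)`_i by rewrite coefD !coefZ.
have sX1 : (size X1 <= n)%N.
  apply/leq_sizeP => i; rewrite leq_eqVlt => /orP[/eqP <-|ni].
    by rewrite c1 coef_pP coef_qP binn subnn expr0 -/g1 -/g2; ring.
  by rewrite c1 coef_pP coef_qP bin_small // !mul0r !mulr0 subrr.
have sX2 : (size X2 <= n.+1)%N.
  by apply/leq_sizeP => i ni; rewrite c2 coef_pP coef_qP bin_small // !mul0r !mulr0 addr0.
have sX1' : (size X1 <= n.+1)%N by apply: leq_trans sX1 _.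
have b0 : b != 0 by apply: b_neq0.
have nf k : (k`!)%:R != 0 :> R by rewrite pnatr_eq0 -lt0n fact_gt0.
have hlast : 2 * b^-1 * g1 * Mq n (2 * n%:R + 1) = 1.
  rewrite Mq_last.
  rewrite (_ : 2 * n%:R + 1 = ((2 * n).+1)%:R :> R); last first.
    by rewrite -addn1 !natrD; ring.
  rewrite prod_natR (_ : (2 * n + n.+1 = 3 * n + 1)%N); last by lia.
  rewrite /b /g1 /gbinom (_ : n%:R / 2 + 1 = n%:R / 2 + 1) //.
  have p0 := poch_neq0 n.
  field; rewrite p0 !nf //.
have gen (A0 B0 : {poly R}) (sg : R) :
    (size A0 <= n.+1)%N -> (size B0 <= n.+1)%N ->
    (forall i, B0`_i + (-1) ^+ i * A0`_i = 2 * b^-1 * g1 * (qP R n)`_i) ->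
    (forall i, B0`_i - (-1) ^+ i * A0`_i = sg * (pP R n)`_i) ->
    (forall k, (k < 2 * n)%N -> momentQ A0 B0 k = 0) /\ momentQ A0 B0 (2 * n) = 1.
  move=> sA sB hu hv; split.
    move=> k; case: (parity k) => [[j ->]|[j ->]] kn.
      rewrite (mom_even _ sA sB); rewrite (_ : \sum_(i < n.+1) _ = 2 * b^-1 * g1 * Mq n (2 * j%:R + 1)).
        by rewrite Mq_zero ?mulr0 //; lia.
      rewrite /Mq mulr_sumr; apply: eq_bigr => i _; rewrite hu; ring.
    rewrite (mom_odd _ sA sB); rewrite (_ : \sum_(i < n.+1) _ = sg * Mp n (2 * j%:R + 2)).
      by rewrite Mp_zero ?mulr0 //; lia.
    rewrite /Mp mulr_sumr; apply: eq_bigr => i _; rewrite hv; ring.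
  transitivity (2 * b^-1 * g1 * Mq n (2 * n%:R + 1)); last exact: hlast.
  rewrite (mom_even _ sA sB) /Mq mulr_sumr; apply: eq_bigr => i _; rewrite hu; ring.
split.
- have sA : (size (b^-1 *: (X2 \Po - 'X)) <= n.+1)%N by apply/sizeZ/size_compN.
  have sB : (size (b^-1 *: X1) <= n.+1)%N by apply/sizeZ.
  have hu : forall i, (b^-1 *: X1)`_i + (-1) ^+ i * (b^-1 *: (X2 \Po - 'X))`_i = 2 * b^-1 * g1 * (qP R n)`_i.
    move=> i; rewrite !coefZ coef_compN c1 c2 mulrCA signsq_mul; ring.
  have hv : forall i, (b^-1 *: X1)`_i - (-1) ^+ i * (b^-1 *: (X2 \Po - 'X))`_i = (- 2 * b^-1 * g2) * (pP R n)`_i.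
    move=> i; rewrite !coefZ coef_compN c1 c2 mulrCA signsq_mul; ring.
  have [h1 h2] := gen _ _ _ sA sB hu hv.
  split => //; first by apply/sizeZ.
    by move=> k kn; apply: h1; lia.
  by rewrite (_ : ((n.+1 + n).-1 = 2 * n)%N) //; lia.
- have sA : (size (b^-1 *: (X1 \Po - 'X)) <= n.+1)%N by apply/sizeZ/size_compN.
  have sB : (size (b^-1 *: X2) <= n.+1)%N by apply/sizeZ.
  have hu : forall i, (b^-1 *: X2)`_i + (-1) ^+ i * (b^-1 *: (X1 \Po - 'X))`_i = 2 * b^-1 * g1 * (qP R n)`_i.
    move=> i; rewrite !coefZ coef_compN c1 c2 mulrCA signsq_mul; ring.
  have hv : forall i, (b^-1 *: X2)`_i - (-1) ^+ i * (b^-1 *: (X1 \Po - 'X))`_i = (2 * b^-1 * g2) * (pP R n)`_i.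
    move=> i; rewrite !coefZ coef_compN c1 c2 mulrCA signsq_mul; ring.
  have [h1 h2] := gen _ _ _ sA sB hu hv.
  split => //; first by apply/sizeZ/size_compN.
    by move=> k kn; apply: h1; lia.
  by rewrite (_ : ((n + n.+1).-1 = 2 * n)%N) //; lia.
Qed.
End S.

Section S.
Variable R : realFieldType.

Lemma uniq_a n (A B A' B' : {poly R}) :
  typeI n.+1 n.+1 A B -> typeI n.+1 n.+1 A' B' -> A = A' /\ B = B'.
Proof.
case=> sA sB hk hl [sA' sB' hk' hl'].
have e : ((n.+1 + n.+1).-1 = (2 * n).+1)%N by lia.
rewrite e in hl hl'.
apply: (uniq_gen sA sB sA' sB').
  by move=> k kn; rewrite hk ?hk' //; lia.
by constructor 3; rewrite hl hl'.
Qed.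

Lemma uniq_b n (A B A' B' : {poly R}) :
  typeI n.+1 n A B -> typeI n.+1 n A' B' -> A = A' /\ B = B'.
Proof.
case=> sA sB hk hl [sA' sB' hk' hl'].
have e : ((n.+1 + n).-1 = 2 * n)%N by lia.
rewrite e in hl hl'.
apply: (uniq_gen sA (leq_trans sB (leqnSn n)) sA' (leq_trans sB' (leqnSn n))).
  move=> k; rewrite leq_eqVlt => /orP[/eqP ->|kn]; first by rewrite hl hl'.
  by rewrite hk ?hk' //; lia.
by constructor 2.
Qed.

Lemma uniq_c n (A B A' B' : {poly R}) :
  typeI n n.+1 A B -> typeI n n.+1 A' B' -> A = A' /\ B = B'.
Proof.
case=> sA sB hk hl [sA' sB' hk' hl'].
have e : ((n + n.+1).-1 = 2 * n)%N by lia.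
rewrite e in hl hl'.
apply: (uniq_gen (leq_trans sA (leqnSn n)) sB (leq_trans sA' (leqnSn n)) sB').
  move=> k; rewrite leq_eqVlt => /orP[/eqP ->|kn]; first by rewrite hl hl'.
  by rewrite hk ?hk' //; lia.
by constructor 1.
Qed.
End S.

Unset Implicit Arguments.
Theorem mainTheorem5 (R : realFieldType) :
  (forall (n : nat) (A B : {poly R}),
     typeI n.+1 n.+1 A B <->
     (let c : R := 2^-1 * ((3 * n + 2)`!)%:R / ((n`!)%:R * ((2 * n + 1)`!)%:R) in
      B = c *: pP R n /\ A = - ((c *: pP R n) \Po (- 'X))))
  /\
  (forall n : nat, (1 <= n)%N ->
     let b : R := 2 * poch (n%:R / 2 + 1) n * ((2 * n)`!)%:R / ((3 * n + 1)`!)%:R in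
     let X1 : {poly R} := gbinom n (n%:R / 2) *: qP R n - gbinom n ((n%:R - 1) / 2) *: pP R n in
     let X2 : {poly R} := gbinom n (n%:R / 2) *: qP R n + gbinom n ((n%:R - 1) / 2) *: pP R n in
     (forall A B : {poly R},
        typeI n.+1 n A B <-> (b *: B = X1 /\ b *: A = X2 \Po (- 'X)))
     /\
     (forall A B : {poly R},
        typeI n n.+1 A B <-> (b *: B = X2 /\ b *: A = X1 \Po (- 'X)))).
Proof.
split.
  move=> n A B; have E := @exist1 R n; split.
    move=> hT; have [-> ->] := uniq_a hT E; by [].
  by cbv zeta; case=> -> ->.
move=> n _ b X1 X2; have [E1 E2] := @exist2 R n.
have b0 : b != 0 by apply: b_neq0.
split => A B; split.
- move=> hT; have [-> ->] := uniq_b hT E1.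
  by rewrite !scalerA mulfV // !scale1r.
- case=> hB hA.
  have -> : B = b^-1 *: X1 by rewrite -hB scalerA mulVf // scale1r.
  have -> : A = b^-1 *: (X2 \Po - 'X) by rewrite -hA scalerA mulVf // scale1r.
  exact: E1.
- move=> hT; have [-> ->] := uniq_c hT E2.
  by rewrite !scalerA mulfV // !scale1r.
- case=> hB hA.
  have -> : B = b^-1 *: X2 by rewrite -hB scalerA mulVf // scale1r.
  have -> : A = b^-1 *: (X1 \Po - 'X) by rewrite -hA scalerA mulVf // scale1r.
  exact: E2.
Qed.
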